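(* Let $d,m\ge 1$, let $\mathcal{X}\subseteq\mathbb{R}^m$, let $u_{\min},u_{\max}\in\mathbb{R}^d$ with $u_{\min}<u_{\max}$ componentwise, and let $\mathcal{U}=\{u\in\mathbb{R}^d:\ u_{\min}\le u\le u_{\max}\}$ (componentwise inequalities). Let $\Phi_s:\mathcal{X}\to\mathcal{X}$, $F_c\in\mathbb{R}^{m\times d}$, $\nu>0$, and assume $A:=F_c^\top F_c+\nu I_d$ has full rank. Fix $x_{(n)}\in\mathcal{X}$ and a reference value $x^{\mathrm{ref}}(t_{n+1})\in\mathcal{X}$, and define $$L_n(u)=\big|\Phi_s(x_{(n)})+F_c u-x^{\mathrm{ref}}(t_{n+1})\big|^2+\nu|u|^2 .$$ Then the problem $\min_{u\in\mathcal{U}}L_n(u)$ has a unique solution $u^*_{(n)}$. Let $(\eta^{*,1}_{(n)},\eta^{*,2}_{(n)})\in\mathbb{R}^d_{\ge0}\times\mathbb{R}^d_{\ge0}$ be the corresponding Lagrange multipliers of the constraints $u-u_{\max}\le 0$ and $u_{\min}-u\le 0$, and let $\lambda_A^{\min},\lambda_A^{\max}>0$ be the smallest and largest eigenvalues of $A$. Then for all $u\in\mathcal{U}$, $$\lambda_A^{\min}|u-u^*_{(n)}|^2\le L_n(u)-L_n(u^*_{(n)})\le\big(|\eta^{*,1}_{(n)}|+|\eta^{*,2}_{(n)}|\big)|u-u^*_{(n)}|+\lambda_A^{\max}|u-u^*_{(n)}|^2 .$$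
   Context: $|\cdot|$ is the Euclidean norm. The Lagrange multipliers are the nonnegative vectors satisfying the KKT conditions $2(F_c^\top F_c+\nu I_d)u^*_{(n)}-2F_c^\top(\Phi_s(x_{(n)})-x^{\mathrm{ref}}(t_{n+1}))+\eta^{*,1}_{(n)}-\eta^{*,2}_{(n)}=0$ together with complementary slackness $\langle\eta^{*,1}_{(n)},u^*_{(n)}-u_{\max}\rangle=0$, $\langle\eta^{*,2}_{(n)},u_{\min}-u^*_{(n)}\rangle=0$. *)

(* Defs.v *)
From HB Require Import structures.
From mathcomp Require Import all_boot all_order all_algebra.
From mathcomp Require Export reals.
Set Implicit Arguments. Unset Strict Implicit. Unset Printing Implicit Defensive.
Import Order.TTheory GRing.Theory Num.Theory.
Local Open Scope ring_scope.

Definition dotv (R : realType) (k : nat) (v w : 'cV[R]_k) : R :=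
  \sum_(i < k) v i 0 * w i 0.

Definition enorm (R : realType) (k : nat) (v : 'cV[R]_k) : R :=
  Num.sqrt (dotv v v).

Definition vle (R : realType) (k : nat) (v w : 'cV[R]_k) : Prop :=
  forall i : 'I_k, v i 0 <= w i 0.

Definition box (R : realType) (d : nat) (umin umax : 'cV[R]_d) (u : 'cV[R]_d) : Prop :=
  vle umin u /\ vle u umax.

(* L_n(u) = |Phi_s(x_n) + F_c u - xref|^2 + nu |u|^2 ; here phix = Phi_s(x_n). *)
Definition Ln (R : realType) (m d : nat) (Fc : 'M[R]_(m, d)) (nu : R)
  (phix xref : 'cV[R]_m) (u : 'cV[R]_d) : R :=
  enorm (phix + Fc *m u - xref) ^+ 2 + nu * enorm u ^+ 2.

(* Lagrange multipliers (eta1, eta2) of the constraints u - umax <= 0 and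
   umin - u <= 0 at ustar: nonnegativity, stationarity of the Lagrangian
   grad L_n(ustar) + eta1 - eta2 = 0, where
   grad L_n(u) = 2 (Fc^T Fc + nu I) u + 2 Fc^T (phix - xref),
   and complementary slackness. *)
Definition lagrange_mult (R : realType) (m d : nat) (Fc : 'M[R]_(m, d)) (nu : R)
  (phix xref : 'cV[R]_m) (umin umax ustar eta1 eta2 : 'cV[R]_d) : Prop :=
  vle 0 eta1 /\ vle 0 eta2 /\
  (2%:R *: ((Fc^T *m Fc + nu%:M) *m ustar) + 2%:R *: (Fc^T *m (phix - xref))
     + eta1 - eta2 = 0) /\
  dotv eta1 (ustar - umax) = 0 /\
  dotv eta2 (umin - ustar) = 0.

Definition min_eigenvalue (R : realType) (d : nat) (A : 'M[R]_d) (lam : R) : Prop :=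
  eigenvalue A lam /\ forall a, eigenvalue A a -> lam <= a.
Definition max_eigenvalue (R : realType) (d : nat) (A : 'M[R]_d) (lam : R) : Prop :=
  eigenvalue A lam /\ forall a, eigenvalue A a -> a <= lam.

(* Main.v *)
Require Import Defs.
From HB Require Import structures.
From mathcomp Require Import all_boot all_order all_algebra reals.
From mathcomp Require Import ring lra.
From mathcomp Require Import classical_sets boolp topology normedtype derive.
Import Order.TTheory GRing.Theory Num.Theory.
Import numFieldNormedType.Exports.
Local Open Scope ring_scope.
Set Implicit Arguments. Unset Strict Implicit.

Section Alg.
Variable R : realType.
Variable k : nat.
Implicit Types v w : 'cV[R]_k.

Lemma dotvC v w : dotv v w = dotv w v.
Proof. by rewrite /dotv; apply: eq_bigr => i _; rewrite mulrC. Qed.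
Lemma dotvDl v v' w : dotv (v + v') w = dotv v w + dotv v' w.
Proof. by rewrite /dotv -big_split; apply: eq_bigr => i _; rewrite !mxE mulrDl. Qed.
Lemma dotvDr v w w' : dotv v (w + w') = dotv v w + dotv v w'.
Proof. by rewrite dotvC dotvDl !(dotvC v). Qed.
Lemma dotvZl a v w : dotv (a *: v) w = a * dotv v w.
Proof. by rewrite /dotv mulr_sumr; apply: eq_bigr => i _; rewrite !mxE mulrA. Qed.
Lemma dotvZr a v w : dotv v (a *: w) = a * dotv v w.
Proof. by rewrite dotvC dotvZl dotvC. Qed.
Lemma dotvNl v w : dotv (- v) w = - dotv v w.
Proof. by rewrite -scaleN1r dotvZl mulN1r. Qed.
Lemma dotvNr v w : dotv v (- w) = - dotv v w.
Proof. by rewrite dotvC dotvNl dotvC. Qed.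
Lemma dotvBl v v' w : dotv (v - v') w = dotv v w - dotv v' w.
Proof. by rewrite dotvDl dotvNl. Qed.
Lemma dotvBr v w w' : dotv v (w - w') = dotv v w - dotv v w'.
Proof. by rewrite dotvDr dotvNr. Qed.
Lemma dotv0l w : dotv 0 w = 0.
Proof. by rewrite /dotv big1 // => i _; rewrite mxE mul0r. Qed.
Lemma dotv_ge0 v : 0 <= dotv v v.
Proof. by rewrite /dotv sumr_ge0 // => i _; rewrite -expr2 sqr_ge0. Qed.
Lemma enorm2 v : enorm v ^+ 2 = dotv v v.
Proof. by rewrite /enorm sqr_sqrtr // dotv_ge0. Qed.
Lemma enorm_ge0 v : 0 <= enorm v.
Proof. exact: sqrtr_ge0. Qed.
Lemma dotv_eq0 v : dotv v v = 0 -> v = 0.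
Proof.
move=> /eqP; rewrite /dotv psumr_eq0 => [/allP H|i _]; last by rewrite -expr2 sqr_ge0.
apply/matrixP => i j; rewrite (ord1 j) mxE; apply/eqP.
by have := H i (mem_index_enum _); rewrite /= mulf_eq0 orbb.
Qed.
End Alg.

Lemma dotv_mulmx (R : realType) (k l : nat) (M : 'M[R]_(k, l)) v w :
  dotv (M *m v) w = dotv v (M^T *m w).
Proof.
rewrite /dotv.
under eq_bigr do rewrite mxE big_distrl /=.
rewrite exchange_big /=; apply: eq_bigr => j _.
rewrite mxE big_distrr /=; apply: eq_bigr => i _; rewrite !mxE; ring.
Qed.
Definition Qf (R : realType) k (A : 'M[R]_k) (h : 'cV[R]_k) := dotv h (A *m h).

Section Q.
Variables (R : realType) (m d : nat) (Fc : 'M[R]_(m, d)) (nu : R) (phix xref : 'cV[R]_m).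
Let A := Fc^T *m Fc + nu%:M.
Let c := phix - xref.

Lemma QfE h : Qf A h = dotv (Fc *m h) (Fc *m h) + nu * dotv h h.
Proof.
rewrite /Qf /A mulmxDl mul_scalar_mx dotvDr dotvZr -mulmxA.
by rewrite (dotvC h (_ *m _)) dotv_mulmx trmxK.
Qed.

Lemma LnE u : Ln Fc nu phix xref u = dotv (Fc *m u + c) (Fc *m u + c) + nu * dotv u u.
Proof. by rewrite /Ln !enorm2 /c addrAC addrC addrA. Qed.

Lemma dotv_sqrD k (v w : 'cV[R]_k) : dotv (v + w) (v + w) = dotv v v + 2 * dotv v w + dotv w w.
Proof. rewrite !(dotvDl, dotvDr) (dotvC w v); ring. Qed.

Lemma Ln_expand u h : Ln Fc nu phix xref (u + h) =
  Ln Fc nu phix xref u + 2 * dotv (A *m u + Fc^T *m c) h + Qf A h.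
Proof.
have -> : A *m u + Fc^T *m c = Fc^T *m (Fc *m u + c) + nu *: u.
  by rewrite /A mulmxDl mul_scalar_mx mulmxDr -mulmxA addrAC.
rewrite !LnE QfE (mulmxDr Fc u h) (addrAC (Fc *m u)) (dotv_sqrD (_ + c)) (dotv_sqrD u h).
rewrite (dotvDl (Fc^T *m _)) dotvZl (dotv_mulmx Fc^T) trmxK.
ring.
Qed.

Lemma Qf_ge h : nu * dotv h h <= Qf A h.
Proof. by rewrite QfE lerDr dotv_ge0. Qed.

Lemma QfN h : Qf A (- h) = Qf A h.
Proof. by rewrite /Qf mulmxN dotvNl dotvNr opprK. Qed.

Lemma Ln_mid mm p : Ln Fc nu phix xref (mm + - p) + Ln Fc nu phix xref (mm + p) =
  2 * Ln Fc nu phix xref mm + 2 * Qf A p.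
Proof. rewrite !Ln_expand QfN dotvNr; ring. Qed.

Lemma Ln_KKT umin umax ustar eta1 eta2 u :
  lagrange_mult Fc nu phix xref umin umax ustar eta1 eta2 ->
  Ln Fc nu phix xref u - Ln Fc nu phix xref ustar =
  dotv eta2 (u - ustar) - dotv eta1 (u - ustar) + Qf A (u - ustar).
Proof.
move=> [_ [_ [S _]]].
have E : eta2 - eta1 = 2 *: (A *m ustar + Fc^T *m c).
  rewrite -[LHS]addr0 -S; apply/matrixP => i j; rewrite !mxE; ring.
set h := u - ustar.
have -> : u = ustar + h by rewrite /h addrC subrK.
rewrite Ln_expand -dotvZl -E dotvBl; ring.
Qed.
End Q.

Section CS.
Variables (R : realType) (k : nat).
Implicit Types a h : 'cV[R]_k.

Lemma CS2 a h : dotv a h ^+ 2 <= dotv a a * dotv h h.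
Proof.
have [a0|] := eqVneq (dotv a a) 0.
  by rewrite a0 (dotv_eq0 a0) dotv0l expr0n /= mul0r.
move=> aa0; have aap : 0 < dotv a a by rewrite lt_def aa0 dotv_ge0.
set t := dotv a h / dotv a a.
have tE : t * dotv a a = dotv a h by rewrite /t mulfVK.
have H := dotv_ge0 (h + - (t *: a)).
rewrite dotv_sqrD !(dotvNl, dotvNr, dotvZl, dotvZr) (dotvC h a) in H.
nra.
Qed.

Lemma CS a h : `|dotv a h| <= enorm a * enorm h.
Proof.
rewrite -sqrtr_sqr /enorm -sqrtrM ?dotv_ge0 // ler_sqrt ?mulr_ge0 ?dotv_ge0 //.
exact: CS2.
Qed.
End CS.

Section Signs.
Variables (R : realType) (k : nat).
Implicit Types u v umin umax ustar : 'cV[R]_k.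

Lemma eta2_sign umin umax ustar (eta2 : 'cV[R]_k) u :
  vle 0 eta2 -> dotv eta2 (umin - ustar) = 0 -> box umin umax u ->
  0 <= dotv eta2 (u - ustar).
Proof.
move=> e0 H [hl _].
have -> : u - ustar = (u - umin) + (umin - ustar) by rewrite addrA subrK.
rewrite dotvDr H addr0 /dotv sumr_ge0 // => i _.
have := e0 i; have := hl i; rewrite !mxE => a b.
by rewrite mulr_ge0 // subr_ge0.
Qed.

Lemma eta1_sign umin umax ustar (eta1 : 'cV[R]_k) u :
  vle 0 eta1 -> dotv eta1 (ustar - umax) = 0 -> box umin umax u ->
  dotv eta1 (u - ustar) <= 0.
Proof.
move=> e0 H [_ hu].
have -> : u - ustar = - (umax - u) - (ustar - umax).
  by rewrite !opprB addrA subrK.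
rewrite dotvBr H subr0 dotvNr oppr_le0 /dotv sumr_ge0 // => i _.
have := e0 i; have := hu i; rewrite !mxE => a b.
by rewrite mulr_ge0 // subr_ge0.
Qed.

Lemma box_mid umin umax u v : box umin umax u -> box umin umax v ->
  box umin umax (2^-1 *: (u + v)).
Proof.
move=> [hu1 hu2] [hv1 hv2]; split => i; rewrite !mxE;
  have := hu1 i; have := hu2 i; have := hv1 i; have := hv2 i; lra.
Qed.
End Signs.

Section Top.
Local Open Scope classical_set_scope.
Variables (R : realType) (d : nat).
Notation T := 'rV[R]_d.

Lemma cont_sum (I : Type) (s : seq I) (f : I -> T -> R) :
  (forall i, continuous (f i)) -> continuous (fun x => \sum_(i <- s) f i x).
Proof.
move=> hf; elim: s => [|a s IH].
  under eq_fun do rewrite big_nil; exact: cst_continuous.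
under eq_fun do rewrite big_cons.
by move=> x; apply: continuousD; [exact: hf | exact: IH].
Qed.

Lemma cont_mul (f g : T -> R) : continuous f -> continuous g -> continuous (fun x => f x * g x).
Proof. move=> hf hg x; exact: (continuousM (hf x) (hg x)). Qed.

Lemma cont_add (f g : T -> R) : continuous f -> continuous g -> continuous (fun x => f x + g x).
Proof. move=> hf hg x; exact: (continuousD (hf x) (hg x)). Qed.

Definition ccont k (F : T -> 'cV[R]_k) := forall i, continuous (fun r => F r i 0).

Lemma ccont_tr : ccont (fun r => r^T).
Proof.
move=> i; have -> : (fun r : T => r^T i 0) = (fun r => r 0 i).
  by apply/funext => r; rewrite mxE.
exact: coord_continuous.
Qed.

Lemma ccont_cst k (c : 'cV[R]_k) : ccont (fun _ => c).
Proof. move=> i; exact: cst_continuous. Qed.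

Lemma ccontD k (F G : T -> 'cV[R]_k) : ccont F -> ccont G -> ccont (fun r => F r + G r).
Proof.
move=> hF hG i; under eq_fun do rewrite mxE.
by move=> x; apply: continuousD; [exact: hF | exact: hG].
Qed.

Lemma ccontN k (F : T -> 'cV[R]_k) : ccont F -> ccont (fun r => - F r).
Proof.
move=> hF i; under eq_fun do rewrite mxE.
by move=> x; apply: continuousN; exact: hF.
Qed.

Lemma ccont_mul k l (M : 'M[R]_(k, l)) (F : T -> 'cV[R]_l) : ccont F -> ccont (fun r => M *m F r).
Proof.
move=> hF i; under eq_fun do rewrite mxE.
apply: cont_sum => j; apply: cont_mul; [exact: cst_continuous | exact: hF].
Qed.

Lemma cont_dotv k (F G : T -> 'cV[R]_k) : ccont F -> ccont G -> continuous (fun r => dotv (F r) (G r)).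
Proof. by move=> hF hG; apply: cont_sum => i; apply: cont_mul. Qed.

Lemma min_on (f : 'cV[R]_d -> R) (S : set T) : continuous (fun r => f r^T) ->
  S !=set0 -> compact S -> exists2 r, S r & forall r', S r' -> f r^T <= f r'^T.
Proof.
move=> hf S0 cS.
have cf : {within S, continuous (fun r => f r^T)} by apply: continuous_subspaceT.
have [c cS' H] := compact_EVT_min S0 cS cf.
exists c; first by rewrite inE in cS'.
by move=> r' Sr'; apply: H; rewrite inE.
Qed.

Lemma box_compact (umin umax : 'cV[R]_d) : compact [set r : T | box umin umax r^T].
Proof.
rewrite (_ : [set r : T | box umin umax r^T] =
   [set v : T | forall i, [set x : R | x \in `[umin i 0, umax i 0]%R] (v ord0 i)]).
  by apply: (rV_compact (A := fun i => [set x : R | x \in `[umin i 0, umax i 0]%R])) => i; exact: segment_compact.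
apply/funext => r; apply/propext; rewrite /box /vle /=; split.
  by move=> [h1 h2] i; have := h1 i; have := h2 i; rewrite !mxE (ord1 0) /= in_itv /= => -> ->.
move=> h; split => i; have := h i; rewrite !mxE (ord1 0) /= in_itv /= => /andP[] //.
Qed.
End Top.

Section Eig.
Local Open Scope classical_set_scope.
Variables (R : realType) (d : nat).
Notation T := 'rV[R]_d.

Lemma Qf_cont (A : 'M[R]_d) : continuous (fun r : T => Qf A r^T).
Proof. apply: cont_dotv; [exact: ccont_tr | apply: ccont_mul; exact: ccont_tr]. Qed.

Lemma nn_cont : continuous (fun r : T => dotv r^T r^T).
Proof. apply: cont_dotv; exact: ccont_tr. Qed.

Lemma sph_compact : compact [set r : T | dotv r^T r^T = 1].
Proof.
apply: (@subclosed_compact _ _ [set r : T | box (const_mx (-1)) (const_mx 1) r^T]).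
- rewrite (_ : [set r : T | dotv r^T r^T = 1] = (fun r : T => dotv r^T r^T) @^-1` [set x | x = 1]) //.
  apply: preimage_closed; last exact: closed_eq.
  by move=> x _; exact: nn_cont.
- exact: box_compact.
move=> r /= H.
have Hi : forall i, (r^T i 0) ^+ 2 <= 1.
  move=> i; rewrite -H /dotv (bigD1 i) //= expr2 lerDl sumr_ge0 // => j _.
  by rewrite -expr2 sqr_ge0.
split => i; have := Hi i; rewrite !mxE => h; nra.
Qed.

Lemma Qf_D (A : 'M[R]_d) x w : A^T = A ->
  Qf A (x + w) = Qf A x + 2 * dotv (A *m x) w + Qf A w.
Proof.
move=> hA; rewrite /Qf mulmxDr !(dotvDl, dotvDr) (dotvC x (A *m w)) dotv_mulmx hA.
rewrite (dotvC w (A *m x)); ring.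
Qed.

Lemma Qf_Z (A : 'M[R]_d) a x : Qf A (a *: x) = a ^+ 2 * Qf A x.
Proof. by rewrite /Qf -scalemxAr dotvZl dotvZr expr2 mulrA. Qed.

Lemma eig_lower (A : 'M[R]_d) : (0 < d)%N -> A^T = A ->
  exists mu, eigenvalue A mu /\ forall h, mu * dotv h h <= Qf A h.
Proof.
move=> hd hA.
have S0 : [set r : T | dotv r^T r^T = 1] !=set0.
  pose i0 := Ordinal hd.
  exists (\row_j ((j == i0)%:R : R)) => /=.
  rewrite /dotv (bigD1 i0) //= big1 => [|j /negbTE ji0]; rewrite !mxE.
    by rewrite eqxx mulr1 addr0.
  by rewrite ji0 mulr0.
have [r0 Sr0 Hmin] := min_on (Qf_cont (A:=A)) S0 sph_compact.
set x0 := r0^T in Sr0 Hmin; move: Sr0 => /= Sr0.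
set mu := Qf A x0.
have Hall : forall h, mu * dotv h h <= Qf A h.
  move=> h; have [h0|hn] := eqVneq (dotv h h) 0.
    by rewrite h0 (dotv_eq0 h0) /Qf dotv0l mulr0.
  have hp : 0 < dotv h h by rewrite lt_def hn dotv_ge0.
  set s := Num.sqrt (dotv h h).
  have sp : 0 < s by rewrite sqrtr_gt0.
  have s2 : s * s = dotv h h by rewrite -expr2 sqr_sqrtr // dotv_ge0.
  set t := s^-1.
  have ts : t * s = 1 by rewrite mulVf // gt_eqF.
  have := Hmin (t *: h)^T; rewrite trmxK Qf_Z => H.
  have : mu <= t ^+ 2 * Qf A h.
    apply: H; rewrite /= trmxK dotvZl dotvZr -s2.
    have -> : t * (t * (s * s)) = (t * s) * (t * s) by ring.
    by rewrite ts mulr1.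
  rewrite expr2 => H2.
  have H3 : mu * (s * s) <= t * t * Qf A h * (s * s).
    by rewrite ler_wpM2r // mulr_ge0 // ltW.
  have E : t * t * Qf A h * (s * s) = (t * s) * (t * s) * Qf A h by ring.
  by rewrite E ts !mul1r s2 in H3.
set z := A *m x0 - mu *: x0.
have Hz : forall t, 0 <= 2 * t * dotv z z + t ^+ 2 * (Qf A z - mu * dotv z z).
  move=> t; have := Hall (x0 + t *: z).
  rewrite Qf_D // Qf_Z dotv_sqrD !(dotvZl, dotvZr) Sr0.
  have -> : dotv (A *m x0) z = dotv z z + mu * dotv x0 z.
    by rewrite /z dotvBl dotvZl (dotvC x0 z); ring.
  move=> H; rewrite /mu in H *; nra.
have q0 : 0 <= Qf A z - mu * dotv z z by rewrite subr_ge0.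
have G0 : dotv z z = 0.
  apply/eqP; rewrite eq_le dotv_ge0 andbT leNgt; apply/negP => Gp.
  set G := dotv z z in Gp Hz; set q := Qf A z - mu * dotv z z in q0 Hz.
  set t := - G / (q + 1).
  have tq : t * (q + 1) = - G by rewrite /t mulfVK // gt_eqF // ltr_wpDl.
  have := Hz t; nra.
have Ax0 : A *m x0 = mu *: x0.
  by apply/eqP; rewrite -subr_eq0; apply/eqP; exact: (dotv_eq0 G0).
exists mu; split => //.
apply/eigenvalueP; exists r0.
  have -> : r0 = x0^T by rewrite /x0 trmxK.
  rewrite -{1}hA -trmx_mul Ax0; apply/matrixP => i j; rewrite !mxE //.
apply/negP => /eqP r00; move: Sr0; rewrite /x0 r00 trmx0 dotv0l => /eqP.
by rewrite eq_sym oner_eq0.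
Qed.
End Eig.

Theorem mainTheorem1 (R : realType) (d m : nat) (hd : (0 < d)%N) (hm : (0 < m)%N)
  (X : 'cV[R]_m -> Prop) (umin umax : 'cV[R]_d)
  (humin : forall i : 'I_d, umin i 0 < umax i 0)
  (Phis : 'cV[R]_m -> 'cV[R]_m) (hPhis : forall x, X x -> X (Phis x))
  (Fc : 'M[R]_(m, d)) (nu : R) (hnu : 0 < nu)
  (hA : \rank (Fc^T *m Fc + nu%:M)%R = d)
  (xn xref : 'cV[R]_m) (hxn : X xn) (hxref : X xref) :
  exists ustar : 'cV[R]_d,
    (box umin umax ustar /\
     (forall u, box umin umax u -> Ln Fc nu (Phis xn) xref ustar <= Ln Fc nu (Phis xn) xref u)) /\
    (forall v, box umin umax v ->
       (forall u, box umin umax u -> Ln Fc nu (Phis xn) xref v <= Ln Fc nu (Phis xn) xref u) ->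
       v = ustar) /\
    (forall (eta1 eta2 : 'cV[R]_d) (lmin lmax : R),
       lagrange_mult Fc nu (Phis xn) xref umin umax ustar eta1 eta2 ->
       min_eigenvalue (Fc^T *m Fc + nu%:M) lmin ->
       max_eigenvalue (Fc^T *m Fc + nu%:M) lmax ->
       forall u, box umin umax u ->
         lmin * enorm (u - ustar) ^+ 2
           <= Ln Fc nu (Phis xn) xref u - Ln Fc nu (Phis xn) xref ustar /\
         Ln Fc nu (Phis xn) xref u - Ln Fc nu (Phis xn) xref ustar
           <= (enorm eta1 + enorm eta2) * enorm (u - ustar) + lmax * enorm (u - ustar) ^+ 2).
Proof.
set phix := Phis xn.
set A := Fc^T *m Fc + nu%:M.
have hAT : A^T = A by rewrite /A linearD /= trmx_mul trmxK tr_scalar_mx.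
have Lcont : continuous (fun r : 'rV[R]_d => Ln Fc nu phix xref r^T).
  under eq_fun do rewrite LnE.
  apply: cont_add.
    apply: cont_dotv; apply: ccontD; (try apply: ccont_mul); (try exact: ccont_tr); exact: ccont_cst.
  apply: cont_mul; first exact: cst_continuous.
  apply: cont_dotv; exact: ccont_tr.
have B0 : ([set r : 'rV[R]_d | box umin umax r^T] !=set0)%classic.
  exists umin^T => /=; rewrite trmxK; split => i //; exact: ltW.
have [r0 Br0 Hmin] := min_on Lcont B0 (@box_compact R d umin umax).
move: Br0 => /= Br0.
have Hmin' : forall u, box umin umax u -> Ln Fc nu phix xref r0^T <= Ln Fc nu phix xref u.
  by move=> u Bu; have := Hmin u^T; rewrite /= !trmxK; apply.
exists r0^T; split; first by split.
split.
  move=> v Bv Hv.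
  set us := r0^T in Br0 Hmin' Hv *.
  have L1 := Hmin' v Bv; have L2 := Hv us Br0.
  set mm := 2^-1 *: (us + v); set p := 2^-1 *: (v - us).
  have e1 : mm + - p = us.
    by apply/matrixP => i j; rewrite !mxE; field.
  have e2 : mm + p = v.
    by apply/matrixP => i j; rewrite !mxE; field.
  have Hm := Ln_mid Fc nu phix xref mm p; rewrite e1 e2 in Hm.
  have L3 := Hmin' mm (box_mid Br0 Bv).
  have Q1 := Qf_ge Fc nu p.
  have pp0 := dotv_ge0 p.
  have pp : dotv p p = 0 by apply/eqP; rewrite eq_le pp0 andbT; nra.
  have /eqP := dotv_eq0 pp; rewrite scaler_eq0 invr_eq0 pnatr_eq0 /= subr_eq0 => /eqP //.
move=> eta1 eta2 lmin lmax KKT [_ Hlmin] [_ Hlmax] u Bu.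
have K := @Ln_KKT R m d Fc nu phix xref umin umax r0^T eta1 eta2 u KKT.
rewrite K.
case: KKT => e10 [e20 [_ [c1 c2]]].
have s2 := eta2_sign e20 c2 Bu.
have s1 := eta1_sign e10 c1 Bu.
set h := u - r0^T in K s1 s2 *.
have [mu1 [E1 H1]] := eig_lower hd hAT.
have l1 := Hlmin _ E1.
have hAT' : (- A)^T = - A by rewrite linearN /= hAT.
have [mu2 [E2 H2]] := eig_lower hd hAT'.
have E2' : eigenvalue A (- mu2).
  apply/eigenvalueP; case/eigenvalueP: E2 => v hv vn; exists v => //.
  by rewrite scaleNr -hv mulmxN opprK.
have l2 := Hlmax _ E2'.
have QN : Qf (- A) h = - Qf A h by rewrite /Qf mulNmx dotvNr.
have H1h := H1 h; have H2h := H2 h; rewrite QN in H2h.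
have hh := dotv_ge0 h.
have CS1 := CS eta1 h; have CS2 := CS eta2 h.
have n1 := ler_norm (- dotv eta1 h); rewrite normrN in n1.
have n2 := ler_norm (dotv eta2 h).
have ge1 := enorm_ge0 eta1; have ge2 := enorm_ge0 eta2; have geh := enorm_ge0 h.
rewrite enorm2.
have P1 : lmin * dotv h h <= mu1 * dotv h h by rewrite ler_wpM2r.
have P2 : - mu2 * dotv h h <= lmax * dotv h h by rewrite ler_wpM2r.
split; lra.
Qed.
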